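(* For every $n\ge 3$ with $n\ne 4$, the wheel $W_n$ is distance antimagic; the wheel $W_4$ is not distance antimagic.
   Context: The wheel $W_n$ ($n\ge3$) is obtained from a cycle $x_1x_2\cdots x_nx_1$ by adding a center vertex $x_0$ adjacent to all $x_1,\dots,x_n$; it has $n+1$ vertices. For a graph $G=(V,E)$ with $v=|V|$ and a bijection $f:V\to\{1,\dots,v\}$, the vertex-weight of $x$ is $w(x)=\sum_{y\in N(x)}f(y)$ with $N(x)$ the set of neighbours of $x$. $G$ is distance antimagic if it admits a bijection $f$ under which all vertex-weights are pairwise distinct. *)

(* Defs.v *)
From mathcomp Require Import all_boot.
Set Implicit Arguments. Unset Strict Implicit. Unset Printing Implicit Defensive.

Definition vweight (T : finType) (adj : rel T) (f : T -> nat) (x : T) : nat :=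
  \sum_(y : T | adj x y) f y.

Definition labeling (T : finType) (f : T -> nat) : Prop :=
  injective f /\ (forall x, 0 < f x <= #|T|).

Definition distance_antimagic (T : finType) (adj : rel T) : Prop :=
  exists f : T -> nat, labeling f /\ injective (vweight adj f).

(* Wheel W_n on vertices 'I_n.+1: 0 is the centre x_0, i in 1..n is x_i,
   the rim cycle is x_1 x_2 ... x_n x_1. *)
Definition rim_adj (n : nat) (i j : nat) : bool :=
  [|| i.+1 == j, j.+1 == i, (i == 1) && (j == n) | (i == n) && (j == 1)].

Definition wheel_adj (n : nat) : rel 'I_n.+1 :=
  fun x y => (x != y) &&
    [|| val x == 0, val y == 0 | rim_adj n (val x) (val y)].
Arguments wheel_adj : clear implicits.
Arguments rim_adj : clear implicits.

(* Main.v *)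
Require Import Defs.
From mathcomp Require Import all_boot zify.

Lemma sum3 (P : pred nat) m (g : nat -> nat) a b c :
  uniq [:: a; b; c] ->
  (forall k, (k \in iota 0 m) && P k = (k \in [:: a; b; c])) ->
  \sum_(k <- iota 0 m | P k) g k = g a + g b + g c.
Proof.
move=> U H; rewrite -big_filter.
rewrite (perm_big [:: a; b; c]) /=; last first.
  apply: uniq_perm => //; first by rewrite filter_uniq // iota_uniq.
  by move=> k; rewrite mem_filter andbC H.
by rewrite !big_cons big_nil addn0 addnA.
Qed.

Definition Padj n i k := (i != k) && [|| i == 0, k == 0 | rim_adj n i k].
Definition prv n i := if i == 1 then n else i.-1.
Definition nxt n i := if i == n then 1 else i.+1.

Lemma vweight_nat n (f : 'I_n.+1 -> nat) (x : 'I_n.+1) :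
  vweight (wheel_adj n) f x =
  \sum_(k <- iota 0 n.+1 | Padj n x k) f (inord k).
Proof.
rewrite /vweight.
have -> : \sum_(k <- iota 0 n.+1 | Padj n x k) f (inord k) =
          \sum_(0 <= k < n.+1 | Padj n x k) f (inord k).
  by rewrite /index_iota subn0.
rewrite big_mkord; apply: eq_big => y.
  by [].
by rewrite inord_val.
Qed.

Lemma test n i k : 3 <= n -> 1 <= i <= n ->
  (k \in iota 0 n.+1) && Padj n i k = (k \in [:: 0; prv n i; nxt n i]).
Proof.
move=> Hn Hi.
rewrite mem_iota !inE /Padj /rim_adj /prv /nxt.
case: ifP => /eqP H1; case: ifP => /eqP H2;
repeat match goal with |- context [?a == ?b] => case: (a =P b) => ? end; simpl; lia.
Qed.

Ltac bsolve := repeat match goal with |- context [?a == ?b] => case: (a =P b) => ? end; simpl; lia.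

Lemma uniq3 n i : 3 <= n -> 1 <= i <= n -> uniq [:: 0; prv n i; nxt n i].
Proof. move=> Hn Hi; rewrite /= !inE /prv /nxt; case: ifP => /eqP ?; case: ifP => /eqP ?; bsolve. Qed.

Lemma uniq3' n i : 3 <= n -> 1 <= i <= n -> uniq [:: i; prv n i; nxt n i].
Proof. move=> Hn Hi; rewrite /= !inE /prv /nxt; case: ifP => /eqP ?; case: ifP => /eqP ?; bsolve. Qed.

Lemma rimW n (f : 'I_n.+1 -> nat) (x : 'I_n.+1) : 3 <= n -> val x != 0 ->
  vweight (wheel_adj n) f x = f (inord 0) + f (inord (prv n x)) + f (inord (nxt n x)).
Proof.
move=> Hn Hx; rewrite vweight_nat (@sum3 _ _ (fun k => f (inord k)) _ _ _ (@uniq3 n x Hn _)) //.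
  by move: Hx; have := ltn_ord x; case: x => [[|x] Hxx] /=; lia.
move=> k; apply: test => //; move: Hx; have := ltn_ord x; case: x => [[|x] Hxx] /=; lia.
Qed.

Lemma cenW n (f : 'I_n.+1 -> nat) (x y : 'I_n.+1) : 3 <= n -> val x = 0 -> val y != 0 ->
  f (inord y) + f (inord (prv n y)) + f (inord (nxt n y)) <= vweight (wheel_adj n) f x.
Proof.
move=> Hn Hx; case: y => m Hm /= Hy; have Hy' : 1 <= m <= n by lia.
rewrite vweight_nat (bigID (fun k => k \in [:: m; prv n m; nxt n m])).
rewrite (@sum3 (fun k => Padj n x k && (k \in [:: m; prv n m; nxt n m])) _ (fun k => f (inord k)) _ _ _ (@uniq3' n m Hn Hy')).
  by rewrite leq_addr.
move=> k; rewrite /Padj Hx /=.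
rewrite !inE ?mem_iota /prv /nxt.
case: ifP => /eqP ?; case: ifP => /eqP ?; bsolve.
Qed.

Lemma prv_le n m : 1 <= m <= n -> prv n m <= n.
Proof. rewrite /prv; case: ifP => /eqP; lia. Qed.
Lemma nxt_le n m : 1 <= m <= n -> nxt n m <= n.
Proof. rewrite /nxt; case: ifP => /eqP; lia. Qed.

Lemma ord_rim n (y : 'I_n.+1) : val y != 0 -> 1 <= val y <= n.
Proof. case: y => m Hm /=; lia. Qed.

Lemma wheel_da n (g : nat -> nat) : 3 <= n ->
  (forall i j, i <= n -> j <= n -> g i = g j -> i = j) ->
  (forall k, k <= n -> 0 < g k <= n.+1) -> g 0 = 1 ->
  (forall i j, 1 <= i <= n -> 1 <= j <= n ->
     g (prv n i) + g (nxt n i) = g (prv n j) + g (nxt n j) -> i = j) ->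
  distance_antimagic (wheel_adj n).
Proof.
move=> Hn Hinj Hb Hg0 HC.
have g2 : forall k, 1 <= k <= n -> 2 <= g k.
  move=> k Hk; have := Hb k; have := Hinj k 0; rewrite Hg0; lia.
exists (fun x => g (val x)); split.
  split; first by move=> x y H; apply: val_inj; apply: (Hinj _ _ _ _ H); [move: (ltn_ord x) | move: (ltn_ord y)]; rewrite ltnS.
  by move=> x; rewrite card_ord; apply: Hb; move: (ltn_ord x); rewrite ltnS.
have fi : forall k, k <= n -> g (val (inord k : 'I_n.+1)) = g k.
  by move=> k Hk; rewrite /= inordK.
have key : forall x y : 'I_n.+1, val x = 0 -> val y != 0 ->
    vweight (wheel_adj n) (fun x => g (val x)) x != vweight (wheel_adj n) (fun x => g (val x)) y.
  move=> x y Hx Hy; have Hy' := ord_rim _ _ Hy.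
  have := @cenW n (fun x => g (val x)) x y Hn Hx Hy.
  rewrite (@rimW n _ y Hn Hy) !fi; try (by []); try (by apply: prv_le); try (by apply: nxt_le); try lia.
  2: by case/andP: Hy'.
  move=> H; apply/negP => /eqP E; rewrite E in H.
  have := g2 _ Hy'; rewrite /= in H *; lia.
move=> x y.
have [Hx|Hx] := eqVneq (val x) 0; have [Hy|Hy] := eqVneq (val y) 0.
- by move=> _; apply: val_inj; rewrite Hx Hy.
- by move/eqP; rewrite (negbTE (key _ _ Hx Hy)).
- by move/esym/eqP; rewrite (negbTE (key _ _ Hy Hx)).
have Hx' := ord_rim _ _ Hx.
have Hy' := ord_rim _ _ Hy.
rewrite (@rimW n _ x Hn Hx) (@rimW n _ y Hn Hy) !fi //; try (by apply: prv_le); try (by apply: nxt_le).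
rewrite -!addnA => /addnI => H; apply: val_inj; exact: HC H.
Qed.

Ltac csolve := rewrite /prv /nxt; repeat (case: ifP => /eqP ?); lia.

Lemma odd_case m : 1 <= m -> distance_antimagic (wheel_adj m.*2.+1).
Proof.
move=> Hm; apply: (@wheel_da _ (fun k => k.+1)).
- lia.
- move=> i j _ _ []; done.
- lia.
- done.
- move=> i j Hi Hj; move: Hi Hj; csolve.
Qed.

Definition geven n k := if k == 1 then n.+1 else if k == n then 2 else k.+1.

Lemma even_case m : 3 <= m -> distance_antimagic (wheel_adj m.*2).
Proof.
move=> Hm; apply: (@wheel_da _ (geven m.*2)).
- lia.
- rewrite /geven => i j Hi Hj; repeat (case: ifP => /eqP ?); lia.
- rewrite /geven => k Hk; repeat (case: ifP => /eqP ?); lia.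
- by rewrite /geven /=; case: ifP => /eqP ? //; lia.
- move=> i j Hi Hj; move: Hi Hj; rewrite /prv /nxt; repeat (case: ifP => /eqP ?); rewrite /geven; repeat (case: ifP => /eqP ?); rewrite ?eqxx /=; lia.
Qed.

Lemma W4 : ~ distance_antimagic (wheel_adj 4).
Proof.
move=> [f [_ Hinj]].
have H1 : val (inord 1 : 'I_5) != 0 by rewrite /= inordK.
have H3 : val (inord 3 : 'I_5) != 0 by rewrite /= inordK.
have := Hinj (inord 1) (inord 3).
rewrite (@rimW 4 f _ isT H1) (@rimW 4 f _ isT H3) !inordK // /prv /nxt /=.
move=> /(_ (addnAC _ _ _)) /(congr1 (@nat_of_ord 5)); rewrite !inordK //.
Qed.

Theorem mainTheorem12 :
  (forall n : nat, 3 <= n -> n != 4 -> distance_antimagic (wheel_adj n)) /\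
  ~ distance_antimagic (wheel_adj 4).
Proof.
split; last exact: W4.
move=> n Hn H4; have Hn2 := odd_double_half n.
case: (boolP (odd n)) => Ho; [rewrite Ho in Hn2 | rewrite (negbTE Ho) in Hn2].
  have -> : n = (n./2).*2.+1 by rewrite /= add1n in Hn2; rewrite Hn2.
  apply: odd_case; move: Hn2; rewrite /= add1n; lia.
have -> : n = (n./2).*2 by rewrite add0n in Hn2; rewrite Hn2.
apply: even_case; move: Hn2 H4 Hn; rewrite add0n; lia.
Qed.
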